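(* Let $S$ be a finite set and let $\mathcal{I}\subseteq 2^S$ be a downset of the Boolean lattice $(2^S,\subseteq)$ (i.e., $Y\subseteq X\in\mathcal{I}$ implies $Y\in\mathcal{I}$). Suppose that there exists $Z\in\mathcal{I}$ with $\hat\mu_{\mathcal{I}}(Z)=0$, and fix such a $Z$. Then $$\mathcal{I}\in \bullet\big(\{\,2^X \mid X\in \mathcal{I}\setminus\{Z\}\,\}\big),$$ where $2^X=\{Y\subseteq S\mid Y\subseteq X\}$ is the principal downset generated by $X$.
   Context: For a finite set $S$ and a configuration $\mathcal{C}\subseteq 2^S$, the generalized Möbius function $\hat\mu_{\mathcal{C}}:2^S\to\mathbb{Z}$ is defined by top-down induction: $\hat\mu_{\mathcal{C}}(X)=[X\in\mathcal{C}]-\sum_{X\subsetneq X'\subseteq S}\hat\mu_{\mathcal{C}}(X')$, where $[X\in\mathcal{C}]$ is $1$ if $X\in\mathcal{C}$ and $0$ otherwise. For sets $A,B$, the disjoint union $A\,\dot\cup\, B$ is $A\cup B$ and is defined only when $A\cap B=\emptyset$; the subset complement $A\,\dot\setminus\, B$ is $A\setminus B$ and is defined only when $B\subseteq A$. For a finite family $\mathcal{F}$ of sets, the partial dot-algebra $\bullet(\mathcal{F})$ is the smallest family of sets that contains $\emptyset$ and every member of $\mathcal{F}$ and is closed under all well-defined disjoint unions and subset complements of its members. Here the members of $\mathcal{F}$ are themselves sets of subsets of $S$, so $\bullet(\mathcal{F})$ consists of subsets of $2^S$. *)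

(* Defs.v *)
From mathcomp Require Import all_boot all_order all_algebra.
Set Implicit Arguments. Unset Strict Implicit. Unset Printing Implicit Defensive.
Import GRing.Theory.
Local Open Scope ring_scope.

(* The finite ground set S is modelled by a finType T; subsets of S are
   {set T}; configurations C ⊆ 2^S are {set {set T}}. *)

(* The fuel #|T|.+1 exceeds the length of every strictly increasing chain
   starting at X, so the recursion is exactly the paper's definition. *)
Fixpoint mobius_fuel (T : finType) (n : nat) (C : {set {set T}}) (X : {set T})
  : int :=
  match n with
  | 0%N => 0
  | n'.+1 => ((X \in C : bool)%:R : int)
             - \sum_(X' : {set T} | X \proper X') mobius_fuel n' C X'
  end.

Definition mobius (T : finType) (C : {set {set T}}) (X : {set T}) : int :=
  mobius_fuel #|T|.+1 C X.

Inductive dot_alg (T : finType) (F : {set {set {set T}}}) : {set {set T}} -> Prop :=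
  | dot_empty : dot_alg F set0
  | dot_gen A : A \in F -> dot_alg F A
  | dot_dunion A B : dot_alg F A -> dot_alg F B -> [disjoint A & B] ->
                     dot_alg F (A :|: B)
  | dot_sdiff A B : dot_alg F A -> dot_alg F B -> B \subset A ->
                    dot_alg F (A :\: B).

Definition is_downset (T : finType) (I : {set {set T}}) : Prop :=
  forall X Y : {set T}, X \in I -> Y \subset X -> Y \in I.

Definition principal (T : finType) (X : {set T}) : {set {set T}} := powerset X.

(* Main.v *)
Require Import Defs.
From mathcomp Require Import all_boot all_order all_algebra.
From mathcomp Require Import zify.
Import GRing.Theory.
Local Open Scope ring_scope.

Lemma card_ind (U : finType) (P : {set U} -> Prop) :
  (forall A : {set U}, (forall B : {set U}, #|B| < #|A| -> P B)%N -> P A) -> forall A, P A.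
Proof.
move=> H A; move: {2}#|A| (leqnn #|A|) => n; elim: n A => [|n IH] A hA.
  by apply: H => B; rewrite (leqn0 _) in hA; move/eqP: hA => ->.
apply: H => B hB; apply: IH; lia.
Qed.

Lemma four (T : finType) (a b c d : {set T}) : a != b -> a != c -> a != d -> b != c -> b != d -> c != d ->
  [/\ [disjoint [set a; b] & [set c; d]], [set b; c] \subset [set a;b] :|: [set c;d] &
  ([set a;b] :|: [set c;d]) :\: [set b; c] = [set a; d]].
Proof.
move=> ab ac ad bc bd cd.
have ba : b != a by rewrite eq_sym.
have da : d != a by rewrite eq_sym.
have db : d != b by rewrite eq_sym.
have dc : d != c by rewrite eq_sym.
split.
- rewrite -setI_eq0; apply/eqP/setP => v; rewrite !inE.
  have [->|va] := eqVneq v a; first by rewrite (negbTE ac) (negbTE ad).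
  have [->|vb] := eqVneq v b; first by rewrite (negbTE bc) (negbTE bd) orbT.
  by [].
- by apply/subsetP => v; rewrite !inE => /orP[]->; rewrite ?orbT.
- apply/setP => v; rewrite !inE.
  have [->|va] := eqVneq v a; first by rewrite (negbTE ab) (negbTE ac).
  have [->|vd] := eqVneq v d; first by rewrite ?(negbTE da) ?(negbTE db) ?(negbTE dc) ?orbT.
  by case: (v == b); case: (v == c).
Qed.

Section S.
Variables (T : finType) (I : {set {set T}}) (Z : {set T}).
Hypothesis downI : is_downset I.
Hypothesis ZI : Z \in I.

Let F := [set principal X | X in I :\ Z].
Local Notation G := (dot_alg F).

Lemma split_alg (A B : {set {set T}}) :
  B \subset A -> G B -> G (A :\: B) -> G A.
Proof.
move=> sBA GB GD.
have -> : A = B :|: (A :\: B).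
  apply/setP=> v; rewrite !inE; case vB: (v \in B) => //=.
  by rewrite (subsetP sBA).
apply: dot_dunion => //.
rewrite -setI_eq0; apply/eqP/setP=> v; rewrite !inE.
by case: (v \in B).
Qed.

Lemma gen_alg X : X \in I -> X != Z -> G (powerset X).
Proof.
move=> XI XZ; apply: dot_gen; apply/imsetP; exists X => //.
by rewrite !inE XZ.
Qed.

Lemma fam1 (A : {set {set T}}) :
  (forall Y, Y \in A -> G [set Y]) -> G A.
Proof.
elim/card_ind: A => A IH H.
case: (set_0Vmem A) => [->|[Y YA]]; first exact: dot_empty.
apply: (split_alg _ [set Y]); first by rewrite sub1set.
  exact: H.
apply: IH.
  by rewrite (cardsD1 Y A) YA; apply/ltP; rewrite setDE; lia.
by move=> V; rewrite !inE => /andP[_ VA]; apply: H.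
Qed.

Lemma sing X : X \in I -> ~~ (Z \subset X) -> G [set X].
Proof.
elim/card_ind: X => X IH XI nZX.
have XZ : X != Z by apply: contra nZX => /eqP ->.
have -> : [set X] = powerset X :\: (powerset X :\ X).
  apply/setP=> v; rewrite !inE; case: (v =P X) => [->|_] //=; first by rewrite subxx.
  by rewrite andNb.
apply: dot_sdiff; [exact: gen_alg | | by rewrite subD1set].
apply: fam1 => Y; rewrite !inE => /andP[YX sYX].
apply: IH.
- by apply: proper_card; rewrite properEneq YX sYX.
- exact: downI XI sYX.
- by apply: contra nZX => /subset_trans; apply.
Qed.

Definition tog (x : T) (Y : {set T}) := if x \in Y then Y :\ x else x |: Y.

Lemma togK x : involutive (tog x).
Proof.
move=> Y; rewrite /tog; case xY: (x \in Y).
  by rewrite setD11 setD1K.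
by rewrite setU11 setU1K // xY.
Qed.

Lemma setD1_nin (x : T) (V : {set T}) : x \notin V -> V :\ x = V.
Proof.
by move=> xV; apply/setP => v; rewrite !inE; case: eqP => // ->; rewrite (negbTE xV).
Qed.

Lemma tog_pair x V : [set V; tog x V] = [set V :\ x; x |: (V :\ x)].
Proof.
rewrite /tog; case: ifP => xV.
  rewrite setD1K //; apply/setP => v; rewrite !inE; by rewrite orbC.
by rewrite setD1_nin // xV.
Qed.

Lemma fam_tog x (A : {set {set T}}) :
  (forall Y, Y \in A -> tog x Y \in A) ->
  (forall Y, Y \in A -> G [set Y; tog x Y]) -> G A.
Proof.
elim/card_ind: A => A IH Hc H.
case: (set_0Vmem A) => [->|[Y YA]]; first exact: dot_empty.
apply: (split_alg _ [set Y; tog x Y]).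
- by apply/subsetP => v; rewrite !inE => /orP[]/eqP->; [|apply: Hc].
- exact: H.
apply: IH.
- apply: proper_card; apply/properP; split; first exact: subsetDl.
  by exists Y => //; rewrite !inE eqxx.
- move=> V; rewrite !inE => /andP[/norP[VY VtY] VA].
  rewrite Hc // andbT; apply/norP; split.
    by apply: contra VtY => /eqP <-; rewrite togK.
  by apply: contra VY => /eqP /(can_inj (togK x)) ->.
- by move=> V; rewrite !inE => /andP[_ VA]; apply: H.
Qed.

Lemma edge (W : {set T}) (x : T) : Z \subset W -> x \notin W -> x |: W \in I -> G [set W; x |: W].
Proof.
elim/card_ind: W => W IH ZW xW xWI.
have xZ : x \notin Z := contra (subsetP ZW x) xW.
have xWZ : x |: W != Z by apply: contraNneq xZ => <-; exact: setU11.
have sWxW : W \subset x |: W by apply: subsetUr.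
set P := powerset (x |: W).
set R := P :\: [set W; x |: W].
have -> : [set W; x |: W] = P :\: R.
  rewrite setDDr setDv set0U; apply/esym/setIidPr.
  by apply/subsetP => v; rewrite !inE => /orP[]/eqP->; rewrite ?subxx.
apply: dot_sdiff; [exact: gen_alg | | exact: subsetDl].
apply: (fam_tog x).
  move=> V; rewrite !inE => /andP[/norP[VW VxW] sV].
  apply/andP; split; last first.
    rewrite /tog; case: ifP => xV.
      by apply: subset_trans sV; apply: subD1set.
    apply/subsetP => v; rewrite !inE => /orP[->//|vV]; move: (subsetP sV v vV); rewrite !inE.
    done.
  apply/norP; split.
    apply: contra VxW => /eqP E; apply/eqP.
    by rewrite -(togK x V) E /tog (negbTE xW).
  apply: contra VW => /eqP E; apply/eqP.
  by rewrite -(togK x V) E /tog setU11 setU1K.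
move=> V; rewrite !inE => /andP[/norP[VW VxW] sV].
rewrite tog_pair; set Y := V :\ x.
have xY : x \notin Y by rewrite setD11.
have sYW : Y \subset W.
  apply/subsetP => v; rewrite !inE => /andP[vx vV].
  by move: (subsetP sV v vV); rewrite !inE (negbTE vx).
have YW : Y != W.
  apply: contra VW => /eqP E; apply/eqP.
  case xV: (x \in V); last by rewrite -E /Y setD1_nin ?xV.
  by move: VxW; rewrite -E /Y setD1K // eqxx.
have sxY : x |: Y \subset x |: W by apply: setUS.
have xYI : x |: Y \in I by apply: downI xWI sxY.
have YI : Y \in I by apply: downI xYI (subsetUr _ _).
case ZY: (Z \subset Y).
  apply: IH => //.
  by apply: proper_card; rewrite properEneq YW sYW.
have nZY : ~~ (Z \subset Y) by rewrite ZY.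
have nZxY : ~~ (Z \subset x |: Y).
  apply: contra nZY => H; apply/subsetP => z zZ.
  move: (subsetP H z zZ); rewrite !inE => /orP[/eqP ez|//].
  by move: xZ; rewrite -ez zZ.
apply: dot_dunion; [exact: sing | exact: sing |].
by rewrite disjoints1 inE; apply: contra xY => /eqP {1}->; exact: setU11.
Qed.

Lemma card0_Z (X : {set T}) : Z \subset X -> #|X :\: Z| = 0%N -> X = Z.
Proof.
move=> ZX /cards0_eq /eqP; rewrite setD_eq0 => XZ; apply/eqP.
by rewrite eqEsubset XZ ZX.
Qed.

Lemma sub_del (Y : {set T}) y : Z \subset Y -> y \in Y :\: Z ->
  [/\ Z \subset Y :\ y, y \notin Y :\ y, y |: (Y :\ y) = Y &
      #|(Y :\ y) :\: Z| = #|Y :\: Z|.-1].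
Proof.
move=> ZY; rewrite inE => /andP[yZ yY]; split.
- apply/subsetP => z zZ; rewrite !inE (subsetP ZY z zZ) andbT.
  by apply/eqP => e; move: yZ; rewrite -e zZ.
- by rewrite setD11.
- by rewrite setD1K.
have -> : (Y :\ y) :\: Z = (Y :\: Z) :\ y.
  by apply/setP => v; rewrite !inE; case: (v == y); case: (v \in Z); case: (v \in Y).
move: (cardsD1 y (Y :\: Z)); rewrite !inE yZ yY /= => ->; by [].
Qed.

Lemma pair_alg n : forall X Y : {set T}, X \in I -> Y \in I -> Z \subset X -> Z \subset Y ->
  odd #|X :\: Z| != odd #|Y :\: Z| -> (#|X :\: Z| <= n)%N -> (#|Y :\: Z| <= n)%N ->
  G [set X; Y].
Proof.
elim: n => [|n IH] X Y XI YI ZX ZY par hX hY.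
  have e1 : #|X :\: Z| = 0%N by move: hX; rewrite leqn0 => /eqP.
  have e2 : #|Y :\: Z| = 0%N by move: hY; rewrite leqn0 => /eqP.
  by move: par; rewrite e1 e2.
wlog le: X Y XI YI ZX ZY par hX hY / (#|X :\: Z| <= #|Y :\: Z|)%N.
  move=> H; case: (leqP #|X :\: Z| #|Y :\: Z|) => [|/ltnW] h; first exact: H.
  have -> : [set X; Y] = [set Y; X] by apply/setP=> v; rewrite !inE orbC.
  by apply: H => //; rewrite eq_sym.
case: (leqP #|Y :\: Z| n) => hYn.
  by apply: IH => //; apply: leq_trans le _.
have eY : #|Y :\: Z| = n.+1 by apply/eqP; rewrite eqn_leq hY hYn.
have [y yYZ] : exists y, y \in Y :\: Z by apply/set0Pn; rewrite -card_gt0 eY.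
have [ZW yW yWY eWZ] := sub_del _ _ ZY yYZ.
rewrite eY /= in eWZ.
set W := Y :\ y in ZW yW yWY eWZ.
have WI : W \in I by apply: downI YI (subD1set _ _).
have GWY : G [set W; Y] by have := edge W y ZW yW; rewrite yWY; apply.
have [->|XW] := eqVneq X W; first exact: GWY.
have oX : odd #|X :\: Z| = odd n.
  by move: par; rewrite eY /=; case: (odd n); case: (odd #|X :\: Z|).
have hXn : (#|X :\: Z| <= n)%N.
  have : #|X :\: Z| != n.+1 by apply: contra par => /eqP ->; rewrite eY.
  by move=> h; rewrite -ltnS ltn_neqAle h hX.
destruct n as [|m].
  have eX : X = Z by apply: (card0_Z _ ZX); move: hXn; rewrite leqn0 => /eqP.
  have eW : W = Z by apply: (card0_Z _ ZW eWZ).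
  by move: XW; rewrite eX eW eqxx.
have [w wWZ] : exists w, w \in W :\: Z by apply/set0Pn; rewrite -card_gt0 eWZ.
have [Zb wb wbW ebZ] := sub_del _ _ ZW wWZ.
rewrite eWZ /= in ebZ.
set b := W :\ w in Zb wb wbW ebZ.
have bI : b \in I by apply: downI WI (subD1set _ _).
have GXb : G [set X; b].
  apply: IH => //; last by rewrite ebZ leqnSn.
  by rewrite oX ebZ /=; case: (odd m).
have GbW : G [set b; W].
  apply: IH => //; [by rewrite ebZ eWZ /=; case: (odd m) | by rewrite ebZ leqnSn | by rewrite eWZ].
have Xb : X != b by apply/eqP => E; move: oX; rewrite E ebZ /=; case: (odd m).
have XY : X != Y by apply/eqP => E; move: par; rewrite E eqxx.
have bW : b != W by apply/eqP => E; move: ebZ; rewrite E eWZ; clear; lia.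
have bY : b != Y by apply/eqP => E; move: ebZ; rewrite E eY; clear; lia.
have WY : W != Y by apply/eqP => E; move: eWZ; rewrite E eY; clear; lia.
have [dj sub eq] := four _ _ _ _ _ Xb XW XY bW bY WY.
rewrite -eq; apply: dot_sdiff => //.
exact: dot_dunion.
Qed.

Definition sg (n : nat) : int := (-1) ^+ n.

Lemma sgS n : sg n.+1 = - sg n.
Proof. by rewrite /sg exprS mulN1r. Qed.

Lemma tog_cond (X Y X' : {set T}) y : y \notin X -> y \in Y ->
  ((X \subset tog y X') && (tog y X' \subset Y)) = ((X \subset X') && (X' \subset Y)).
Proof.
move=> yX yY; rewrite /tog; case: ifP => yX'.
  rewrite subsetD1 yX andbT; congr (_ && _); apply/idP/idP => H.
    apply/subsetP => v vX'; case: (eqVneq v y) => [->//|vy].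
    by apply: (subsetP H); rewrite !inE vy.
  exact: subset_trans (subD1set _ _) H.
congr (_ && _).
  apply/idP/idP => H; last exact: subset_trans H (subsetU1 _ _).
  apply/subsetP => v vX; move: (subsetP H v vX); rewrite !inE => /orP[/eqP e|//].
  by move: yX; rewrite -e vX.
by rewrite subUset sub1set yY.
Qed.

Lemma tog_sg (Y X' : {set T}) y : y \in Y -> sg #|Y :\: tog y X'| = - sg #|Y :\: X'|.
Proof.
move=> yY; rewrite /tog; case: ifP => yX'.
  have -> : Y :\: (X' :\ y) = y |: (Y :\: X').
    apply/setP => v; rewrite !inE; case: (eqVneq v y) => [->|] /=; first by rewrite yY.
    by [].
  by rewrite cardsU1 !inE yX' /= add1n sgS.
have : #|Y :\: X'| = (#|Y :\: (y |: X')|).+1.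
  rewrite (cardsD1 y) !inE yX' yY add1n; congr (_.+1).
  by apply: eq_card => v; rewrite !inE negb_or andbA.
by move=> ->; rewrite sgS opprK.
Qed.

Lemma alt (X Y : {set T}) :
  \sum_(X' : {set T} | (X \subset X') && (X' \subset Y)) sg #|Y :\: X'| = ((X == Y : bool)%:R : int).
Proof.
have [<-|XY] := eqVneq X Y.
  rewrite (big_pred1 X) ?setDv ?cards0 //.
  by move=> X'; rewrite /= eqEsubset andbC.
case sXY: (X \subset Y); last first.
  rewrite big_pred0 // => X'; apply/negbTE; apply: contraFN sXY => /andP[a b].
  exact: subset_trans a b.
have [y] : exists y, y \in Y :\: X.
  apply/set0Pn; apply: contra XY; rewrite setD_eq0 => YX.
  by rewrite eqEsubset sXY YX.
rewrite inE => /andP[yX yY].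
set S := (X in X = _).
have : S = - S.
  rewrite {1}/S (reindex_inj (can_inj (togK y))) /= -sumrN.
  apply: eq_big => X'; first exact: tog_cond.
  by move=> _; rewrite tog_sg.
move=> h /=; lia.
Qed.

Definition fmob (X : {set T}) : int := \sum_(Y in I | X \subset Y) sg #|Y :\: X|.

Lemma sum_fmob (X : {set T}) : \sum_(X' : {set T} | X \subset X') fmob X' = ((X \in I : bool)%:R : int).
Proof.
rewrite /fmob (exchange_big_dep (fun Y => Y \in I)) /=; last by move=> i j _ /andP[].
rewrite (eq_bigr (fun Y => ((X == Y : bool)%:R : int))); last first.
  move=> Y YI; rewrite -(alt X Y); apply: eq_bigl => X'; by rewrite YI.
case XI: (X \in I).
  rewrite (bigD1 X) //= eqxx big1 ?addr0 // => Y /andP[_ YX].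
  by rewrite eq_sym (negbTE YX).
rewrite big1 // => Y YI; case: eqP => // E; by move: XI; rewrite E YI.
Qed.

Lemma mob_fuel n (X : {set T}) : (#|T| - #|X| < n)%N -> mobius_fuel n I X = fmob X.
Proof.
elim: n X => [//|n IH] X h /=.
rewrite (eq_bigr (fun X' => fmob X')); last first.
  move=> X' pX'; apply: IH.
  have := proper_card pX'; have := subset_leq_card (subsetT X'); rewrite cardsT; move: h; clear; lia.
rewrite -sum_fmob (bigD1 X) //=.
rewrite (eq_bigl (fun X' : {set T} => X \proper X') (fun i => fmob i)); first by rewrite addrK.
by move=> X'; rewrite properEneq eq_sym andbC.
Qed.

Lemma mobius_eq : mobius I Z = \sum_(Y in I | Z \subset Y) sg #|Y :\: Z|.
Proof. by rewrite /mobius mob_fuel // ltnS leq_subr. Qed.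

Lemma fam_pairs (A : {set {set T}}) :
  (forall Y, Y \in A -> (Y \in I) && (Z \subset Y)) ->
  \sum_(Y in A) sg #|Y :\: Z| = 0 -> G A.
Proof.
elim/card_ind: A => A IH sub s0.
case: (set_0Vmem A) => [->|[Y0 Y0A]]; first exact: dot_empty.
have Apos : (0 < #|A|)%N by apply/card_gt0P; exists Y0.
have ex (b : bool) : exists2 X, X \in A & odd #|X :\: Z| = b.
  case: (boolP [exists X in A, odd #|X :\: Z| == b]).
    by move=> /existsP[X /andP[XA /eqP]]; exists X.
  move/existsPn => H; exfalso.
  have : \sum_(Y in A) sg #|Y :\: Z| = (-1) ^+ (~~ b) *+ #|A|.
    rewrite -sumr_const; apply: eq_bigr => Y YA; rewrite /sg -signr_odd.
    move: (H Y); rewrite YA /=; clear H; case: b; by case: (odd #|Y :\: Z|).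
  rewrite s0; clear H; case: b => /=; rewrite ?expr0 ?expr1 => h; move: h Apos; clear.
    by move=> /esym; rewrite natz => -[] ->.
  by move=> /esym/eqP; rewrite mulNrn oppr_eq0 natz => /eqP [] ->.
have [X XA oX] := ex true.
have [Y YA oY] := ex false.
have XY : X != Y by apply/eqP => E; move: oX; rewrite E oY.
have [XI ZX] := andP (sub X XA).
have [YI ZY] := andP (sub Y YA).
apply: (split_alg _ [set X; Y]).
- by apply/subsetP => v; rewrite !inE => /orP[]/eqP->.
- apply: (pair_alg #|T|) => //; first by rewrite oX oY.
    by apply: max_card.
  by apply: max_card.
apply: IH.
- apply: proper_card; apply/properP; split; first exact: subsetDl.
  by exists X => //; rewrite !inE eqxx.
- by move=> V; rewrite !inE => /andP[_ VA]; apply: sub.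
rewrite (bigD1 X XA) (bigD1 Y) /= in s0; last by apply/andP; split => //; rewrite eq_sym.
have sX : sg #|X :\: Z| = -1 by rewrite /sg -signr_odd oX.
have sY : sg #|Y :\: Z| = 1 by rewrite /sg -signr_odd oY.
rewrite sX sY in s0.
rewrite (eq_bigl (fun i => ((i \in A) && (i != X)) && (i != Y))); first by move: s0; rewrite addKr; apply.
by move=> i; rewrite !inE negb_or andbC andbA.
Qed.

Lemma main : mobius I Z = 0 -> G I.
Proof.
move=> m0.
set U := [set Y in I | Z \subset Y].
have GU : G U.
  apply: fam_pairs => [Y|]; first by rewrite inE.
  apply: (etrans _ m0); rewrite mobius_eq; apply: eq_bigl => Y; by rewrite inE.
apply: (split_alg _ U) => //.
  by apply/subsetP => Y; rewrite inE => /andP[].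
apply: fam1 => Y; rewrite !inE => /andP[YnU YI].
by apply: sing => //; rewrite YI in YnU.
Qed.

End S.

Theorem theorem6p2 (T : finType) (I : {set {set T}}) (Z : {set T}) :
  is_downset I -> Z \in I -> mobius I Z = 0 ->
  dot_alg [set principal X | X in I :\ Z] I.
Proof.
move=> dI ZI m0.
by apply: main.
Qed.
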